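(* Let $x_1,\dots,x_n$ be independent random variables taking values in $[0,1]$ with $\mathbb{E}[x_i]\le\nu$ for all $i$, for some $\nu\in[0,1]$. For any $c\ge1$ and any $\lambda\in\big[0,\frac{\ln c}{4n-3}\big]$, $$\mathbb{E}\exp\big(\lambda(x_1+\dots+x_n)^2\big)\le\exp\big(\lambda cn\nu(1+cn\nu)\big).$$ *)

(* Defs.v *)
From HB Require Import structures.
From mathcomp Require Import all_boot all_order all_algebra.
From mathcomp Require Import all_classical all_reals all_analysis.

Set Implicit Arguments.
Unset Strict Implicit.
Unset Printing Implicit Defensive.

Import Order.TTheory GRing.Theory Num.Theory.

Local Open Scope classical_set_scope.
Local Open Scope ring_scope.

Definition mutually_independent d (T : measurableType d) (R : realType)
    (P : probability T R) (n : nat) (X : 'I_n -> T -> R) : Prop :=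
  forall (J : {set 'I_n}) (B : 'I_n -> set R),
    (forall i, measurable (B i)) ->
    P (\bigcap_(i in [set i | i \in J]) (X i @^-1` B i)) =
      (\prod_(i in J) P (X i @^-1` B i))%E.

(* Main.v *)
Require Import Defs.
From HB Require Import structures.
From mathcomp Require Import all_boot all_order all_algebra.
From mathcomp Require Import all_classical all_reals all_analysis.
From mathcomp Require Import lra ring.
From mathcomp Require Import measurable_realfun.
Import Order.TTheory GRing.Theory Num.Theory.
Local Open Scope classical_set_scope.
Local Open Scope ring_scope.

Section S.
Context (R : realType).

Lemma expR_le_lin {c z : R} : 1 <= c -> 0 <= z -> z <= ln c -> expR z <= 1 + c * z.
Proof.
move=> c1 z0 zc.
have h1 : 1 - z <= expR (- z) by have := expR_ge1Dx (- z); lra.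
have h2 : expR z * (1 - z) <= 1.
  have := ler_wpM2l (expR_ge0 z) h1.
  by rewrite -expRD subrr expR0.
have h3 : expR z <= c.
  have c0 : 0 < c by lra.
  by rewrite -(lnK c0) ler_expR.
nra.
Qed.

Context (N : nat).
Context (N0 : (0 < N)%N).
Definition vv (k : 'I_N.+1) : R := k%:R / N%:R.

Lemma vv_ge0 k : 0 <= vv k.
Proof. by rewrite /vv divr_ge0. Qed.

Lemma vv_le1 k : vv k <= 1.
Proof.
rewrite /vv ler_pdivrMr ?ltr0n // mul1r ler_nat.
by rewrite -ltnS ltn_ord.
Qed.

Lemma step (lam c nu t : R) (q : 'I_N.+1 -> R) :
  0 <= lam -> 1 <= c -> 0 <= nu -> 0 <= t -> lam * (2 * t + 1) <= ln c ->
  (forall k, 0 <= q k) -> \sum_k q k <= 1 -> \sum_k q k * vv k <= nu ->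
  \sum_k q k * expR (lam * (t + vv k) ^+ 2) <=
    expR (lam * c * nu - lam * c ^+ 2 * nu ^+ 2) * expR (lam * (t + c * nu) ^+ 2).
Proof.
move=> l0 c1 nu0 t0 hl q0 sq sqv.
have pt k : expR (lam * (t + vv k) ^+ 2) <=
    expR (lam * t ^+ 2) * (1 + c * (lam * (2 * t + 1)) * vv k).
  have v0 := vv_ge0 k; have v1 := vv_le1 k.
  have -> : lam * (t + vv k) ^+ 2 = lam * t ^+ 2 + lam * (2 * t + vv k) * vv k by ring.
  rewrite expRD ler_wpM2l ?expR_ge0 //.
  have hz : 0 <= lam * (2 * t + vv k) * vv k by apply: mulr_ge0 => //; apply: mulr_ge0 => //; lra.
  have hz2 : lam * (2 * t + vv k) * vv k <= lam * (2 * t + 1) * vv k.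
    apply: ler_wpM2r => //; apply: ler_wpM2l => //; lra.
  have hz3 : lam * (2 * t + 1) * vv k <= lam * (2 * t + 1).
    rewrite -[X in _ <= X]mulr1; apply: ler_wpM2l => //; apply: mulr_ge0 => //; lra.
  have hz4 : lam * (2 * t + vv k) * vv k <= ln c by lra.
  have := expR_le_lin c1 hz hz4.
  have : c * (lam * (2 * t + vv k) * vv k) <= c * (lam * (2 * t + 1) * vv k).
    by apply: ler_wpM2l => //; lra.
  lra.
apply: le_trans (ler_sum _ (fun k _ => ler_wpM2l (q0 k) (pt k))) _.
have -> : \sum_k q k * (expR (lam * t ^+ 2) * (1 + c * (lam * (2 * t + 1)) * vv k)) =
   expR (lam * t ^+ 2) * (\sum_k q k + c * (lam * (2 * t + 1)) * \sum_k q k * vv k).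
  rewrite mulrDr mulrA (mulrC (expR _)) -!mulrA !mulr_sumr -big_split /=.
  by rewrite mulr_suml; apply: eq_bigr => k _; ring.
have -> : expR (lam * c * nu - lam * c ^+ 2 * nu ^+ 2) * expR (lam * (t + c * nu) ^+ 2)
   = expR (lam * t ^+ 2) * expR (c * (lam * (2 * t + 1)) * nu).
  by rewrite -!expRD; congr expR; ring.
apply: ler_wpM2l; first exact: expR_ge0.
apply: le_trans (expR_ge1Dx _).
have hc : 0 <= c * (lam * (2 * t + 1)) by apply: mulr_ge0; [lra| apply: mulr_ge0 => //; lra].
have := ler_wpM2l hc sqv.
lra.
Qed.

Definition fcons {n} (k : 'I_N.+1) (g : {ffun 'I_n -> 'I_N.+1}) : {ffun 'I_n.+1 -> 'I_N.+1} :=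
  [ffun i => if unlift ord0 i is Some j then g j else k].

Lemma fcons0 n k (g : {ffun 'I_n -> 'I_N.+1}) : fcons k g ord0 = k.
Proof. by rewrite ffunE unlift_none. Qed.

Lemma fconsS n k (g : {ffun 'I_n -> 'I_N.+1}) j : fcons k g (lift ord0 j) = g j.
Proof. by rewrite ffunE liftK. Qed.

Lemma sum_ffunS n (F : {ffun 'I_n.+1 -> 'I_N.+1} -> R) :
  \sum_(f : {ffun 'I_n.+1 -> 'I_N.+1}) F f =
  \sum_(k : 'I_N.+1) \sum_(g : {ffun 'I_n -> 'I_N.+1}) F (fcons k g).
Proof.
rewrite pair_big /=.
rewrite (reindex (fun p : 'I_N.+1 * {ffun 'I_n -> 'I_N.+1} => fcons p.1 p.2)) //=.
exists (fun f : {ffun 'I_n.+1 -> 'I_N.+1} => (f ord0, [ffun j => f (lift ord0 j)])).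
  move=> [k g] _ /=; rewrite fcons0; congr pair; apply/ffunP => j.
  by rewrite ffunE fconsS.
move=> f _; apply/ffunP => i; rewrite ffunE.
by case: unliftP => [j ->|->]; rewrite ?ffunE.
Qed.


Lemma claim (lam c nu : R) (n : nat) : 0 <= lam -> 1 <= c -> 0 <= nu -> c * nu <= 1 ->
  forall (q : 'I_n -> 'I_N.+1 -> R) (a : R),
  (forall i k, 0 <= q i k) -> (forall i, \sum_k q i k <= 1) ->
  (forall i, \sum_k q i k * vv k <= nu) ->
  0 <= a -> lam * (2 * (a + n%:R) - 1) <= ln c ->
  \sum_(f : {ffun 'I_n -> 'I_N.+1}) (\prod_i q i (f i)) * expR (lam * (a + \sum_i vv (f i)) ^+ 2)
   <= expR (lam * c * nu - lam * c ^+ 2 * nu ^+ 2) ^+ n * expR (lam * (a + n%:R * c * nu) ^+ 2).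
Proof.
move=> l0 c1 nu0 cnu.
elim: n => [|n IH] q a q0 sq sqv a0 ha.
  rewrite (big_pred1 [ffun i => ord0]) => [|f]; last first.
    by symmetry; apply/eqP/ffunP => -[].
  by rewrite big_ord0 big_ord0 mul1r expr0 mul1r mul0r !addr0 mul0r addr0.
rewrite sum_ffunS.
set K := expR (lam * c * nu - lam * c ^+ 2 * nu ^+ 2).
have K0 : 0 <= K by exact: expR_ge0.
pose q' j := q (lift ord0 j).
have e1 k : \sum_(g : {ffun 'I_n -> 'I_N.+1})
    (\prod_i q i (fcons k g i)) * expR (lam * (a + \sum_i vv (fcons k g i)) ^+ 2) =
    q ord0 k * \sum_(g : {ffun 'I_n -> 'I_N.+1})
    (\prod_i q' i (g i)) * expR (lam * ((a + vv k) + \sum_i vv (g i)) ^+ 2).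
  rewrite mulr_sumr; apply: eq_bigr => g _.
  rewrite big_ord_recl big_ord_recl fcons0.
  have h1 : \prod_(i < n) q (lift ord0 i) (fcons k g (lift ord0 i)) = \prod_i q' i (g i).
    by apply: eq_bigr => i _; rewrite fconsS.
  have h2 : \sum_(i < n) vv (fcons k g (lift ord0 i)) = \sum_i vv (g i).
    by apply: eq_bigr => i _; rewrite fconsS.
  by rewrite h1 h2 mulrA addrA.
under eq_bigr do rewrite e1.
have nS : (n.+1)%:R = n%:R + 1 :> R by rewrite -natr1.
apply: (@le_trans _ _ (\sum_k q ord0 k * (K ^+ n * expR (lam * ((a + n%:R * c * nu) + vv k) ^+ 2)))).
  apply: ler_sum => k _; apply: ler_wpM2l => //.
  have -> : a + n%:R * c * nu + vv k = (a + vv k) + n%:R * c * nu by ring.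
  apply: (IH q').
  - by move=> i k'; exact: q0.
  - by move=> i; exact: sq.
  - by move=> i; exact: sqv.
  - by rewrite addr_ge0 // vv_ge0.
  - apply: le_trans ha; apply: ler_wpM2l => //.
    have := vv_le1 k; rewrite nS; lra.
have -> : \sum_k q ord0 k * (K ^+ n * expR (lam * (a + n%:R * c * nu + vv k) ^+ 2)) =
  K ^+ n * \sum_k q ord0 k * expR (lam * (a + n%:R * c * nu + vv k) ^+ 2).
  by rewrite mulr_sumr; apply: eq_bigr => k _; ring.
rewrite exprS (mulrC K) -[K ^+ n * K * _]mulrA; apply: ler_wpM2l; first exact: exprn_ge0.
have -> : a + (n.+1)%:R * c * nu = (a + n%:R * c * nu) + c * nu by rewrite nS; ring.
apply: step => //.
- have n0 : 0 <= n%:R :> R by [].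
  by apply: addr_ge0 => //; apply: mulr_ge0 => //; apply: mulr_ge0 => //; lra.
- apply: le_trans ha; apply: ler_wpM2l => //.
  have n0 : 0 <= n%:R :> R by [].
  have : n%:R * c * nu <= n%:R by rewrite -mulrA ler_piMr.
  rewrite nS; lra.
Qed.


Definition Bset (k : 'I_N.+1) : set R := [set y | Num.ceil (N%:R * y) = k%:Z].
Definition idx (y : R) : 'I_N.+1 := inord `|Num.ceil (N%:R * y)|%N.

Lemma N0R : 0 < N%:R :> R. Proof. by rewrite ltr0n. Qed.

Lemma Bset_iff k y : Bset k y <-> (k%:R - 1) / N%:R < y <= k%:R / N%:R.
Proof.
rewrite /Bset /=; split.
  move/eqP; rewrite ceil_eq => /andP[h1 h2].
  rewrite ltr_pdivrMr ?N0R // ler_pdivlMr ?N0R // !(mulrC y).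
  rewrite intrB /= in h1.
  by rewrite h2 andbT.
move=> /andP[h1 h2]; apply/eqP; rewrite ceil_eq intrB /=.
rewrite ltr_pdivrMr ?N0R // ler_pdivlMr ?N0R // !(mulrC y) in h1 h2.
by rewrite h1 h2.
Qed.

Lemma Bset_meas k : measurable (Bset k).
Proof.
have -> : Bset k = `]((k%:R - 1) / N%:R), (k%:R / N%:R)]%classic.
  by apply/seteqP; split => y /=; rewrite in_itv /= => /Bset_iff.
exact: measurable_itv.
Qed.

Lemma idx_in y : 0 <= y <= 1 -> Bset (idx y) y.
Proof.
move=> /andP[y0 y1].
have c0 : (0 <= Num.ceil (N%:R * y))%R.
  by rewrite ceil_ge0; apply: (@lt_le_trans _ _ 0); [lra| rewrite mulr_ge0].
have cN : (Num.ceil (N%:R * y) <= N%:Z)%R.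
  by rewrite ceil_le_int /= -[X in _ <= X]mulr1 ler_wpM2l.
rewrite /Bset /idx /= inordK; first by rewrite gez0_abs.
by rewrite ltnS -lez_nat gez0_abs.
Qed.

Lemma Bset_uniq y k k' : Bset k y -> Bset k' y -> k = k'.
Proof. by rewrite /Bset /= => -> [] /val_inj. Qed.

Lemma Bset_le y k : Bset k y -> y <= vv k.
Proof. by move=> /Bset_iff /andP[]. Qed.

Lemma Bset_ge y k : Bset k y -> vv k <= y + N%:R^-1.
Proof.
move=> /Bset_iff /andP[h _]; rewrite /vv.
have -> : k%:R / N%:R = (k%:R - 1) / N%:R + N%:R^-1 :> R.
  by rewrite mulrBl div1r subrK.
by rewrite lerD2r ltW.
Qed.


Context (d : measure_display) (T : measurableType d) (P : probability T R).

Lemma E_simple (I : finType) (c : I -> R) (A : I -> set T) :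
  (forall j, 0 <= c j) -> (forall j, measurable (A j)) ->
  ('E_P[fun w => (\sum_j c j * \1_(A j) w)%R] = (\sum_j c j * fine (P (A j)))%:E)%E.
Proof.
move=> c0 mA; rewrite unlock.
under eq_integral do rewrite -sumEFin.
rewrite ge0_integral_sum //; last 2 first.
- move=> j; apply/measurable_EFinP; apply: measurable_funM => //.
- by move=> j w _; rewrite lee_fin mulr_ge0.
rewrite -sumEFin; apply: eq_bigr => j _.
under eq_integral do rewrite EFinM.
rewrite ge0_integralZl_EFin //.
rewrite integral_indic // setIT EFinM fineK //; first by rewrite fin_num_measure.
by apply/measurable_EFinP; exact: measurable_indic.
Qed.

Context (n : nat) (x : 'I_n -> {RV P >-> R}).
Context (hx : forall i w, 0 <= x i w <= 1).

Definition qq i k := fine (P (x i @^-1` Bset k)).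

Lemma pre_meas i k : measurable (x i @^-1` Bset k).
Proof.
by rewrite -[_ @^-1` _]setTI; apply: (measurable_funPT (x i)) => //; exact: Bset_meas.
Qed.

Lemma qq_ge0 i k : 0 <= qq i k.
Proof. by rewrite /qq fine_ge0. Qed.

Lemma pt_simple i (w : 'I_N.+1 -> R) om :
  \sum_k w k * \1_(x i @^-1` Bset k) om = w (idx (x i om)).
Proof.
rewrite (bigD1 (idx (x i om))) //= big1 ?addr0.
  by rewrite indicE mem_set ?mulr1 //; exact: idx_in.
move=> k hk; rewrite indicE memNset ?mulr0 //= => hb.
by move: hk; rewrite (Bset_uniq _ _ _ hb (idx_in _ (hx i om))) eqxx.
Qed.

Lemma qq_sum i (w : 'I_N.+1 -> R) : (forall k, 0 <= w k) ->
  ((\sum_k w k * qq i k)%:E = 'E_P[fun om => w (idx (x i om))])%E.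
Proof.
move=> w0; rewrite -E_simple //; last by move=> k; exact: pre_meas.
by congr expectation; apply/funext => om; rewrite pt_simple.
Qed.

Lemma qq_sum1 i : \sum_k qq i k <= 1.
Proof.
have h : ((\sum_k (1%R * qq i k)%R)%:E = 'E_P[cst 1%R])%E := @qq_sum i (fun _ => 1) (fun _ => ler01).
rewrite expectation_cst in h; have {}h := EFin_inj h.
rewrite -[X in _ <= X]h le_eqVlt; apply/orP; left; apply/eqP/eq_bigr => k _; by rewrite mul1r.
Qed.


Lemma qq_sumv i nu : ('E_P[x i] <= nu%:E)%E ->
  \sum_k qq i k * vv k <= nu + N%:R^-1.
Proof.
move=> hE.
have h1 : ((\sum_k vv k * qq i k)%:E =
    'E_P[fun om => (\sum_k vv k * \1_(x i @^-1` Bset k) om)%R])%E.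
  by rewrite E_simple //; [move=> k; exact: vv_ge0| move=> k; exact: pre_meas].
have h2 : ('E_P[fun om => (\sum_k vv k * \1_(x i @^-1` Bset k) om)%R] <=
    'E_P[fun om => (x i om + N%:R^-1)%R])%E.
  apply: expectation_le.
  - apply: measurable_sum => k; apply: measurable_funM => //.
    exact/measurable_indic/pre_meas.
  - by apply: measurable_funD => //; exact: measurable_funPT.
  - by move=> om; apply: sumr_ge0 => k _; rewrite mulr_ge0 ?vv_ge0 ?indicE.
  - by move=> om; apply: addr_ge0; [case/andP: (hx i om) | rewrite invr_ge0].
  - apply: aeW => om; rewrite pt_simple; apply: Bset_ge; exact: idx_in.
have h3 : ('E_P[fun om => (x i om + N%:R^-1)%R] = 'E_P[x i] + (N%:R^-1)%:E)%E.
  rewrite unlock; under eq_integral do rewrite EFinD.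
  rewrite ge0_integralD //.
  - by rewrite integral_cst //= probability_setT mule1.
  - by move=> om _; rewrite lee_fin; have := hx i om; lra.
  - by apply/measurable_EFinP; exact: measurable_funPT.
have : ((\sum_k vv k * qq i k)%:E <= (nu + N%:R^-1)%:E)%E.
  rewrite h1 (le_trans h2) // h3 EFinD; exact: leeD.
rewrite lee_fin; apply: le_trans; rewrite le_eqVlt; apply/orP; left; apply/eqP/eq_bigr => k _; by rewrite mulrC.
Qed.

Context (hind : mutually_independent P (fun i => (x i : T -> R))).

Definition Aev (f : {ffun 'I_n -> 'I_N.+1}) : set T :=
  \bigcap_(i in [set i | i \in [set: 'I_n]%SET]) (x i @^-1` Bset (f i)).

Lemma Aev_meas f : measurable (Aev f).
Proof.
apply: fin_bigcap_measurable; first exact: finite_finset.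
move=> i _; exact: pre_meas.
Qed.

Lemma P_Aev f : fine (P (Aev f)) = \prod_i qq i (f i).
Proof.
rewrite /Aev (hind [set: 'I_n]%SET (fun i => Bset (f i)) (fun i => Bset_meas (f i))).
rewrite (eq_bigr (fun i => (qq i (f i))%:E)); last first.
  by move=> i _; rewrite /qq fineK // fin_num_measure //; exact: pre_meas.
rewrite prodEFin /=.
by apply: eq_bigl => i; rewrite inE.
Qed.

Lemma disc lam : 0 <= lam ->
  ('E_P[fun w => expR (lam * (\sum_i x i w) ^+ 2)] <=
  (\sum_(f : {ffun 'I_n -> 'I_N.+1}) (\prod_i qq i (f i)) *
      expR (lam * (0 + \sum_i vv (f i)) ^+ 2))%:E)%E.
Proof.
move=> l0.
set G := fun f : {ffun 'I_n -> 'I_N.+1} => expR (lam * (0 + \sum_i vv (f i)) ^+ 2).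
have -> : (\sum_(f : {ffun 'I_n -> 'I_N.+1}) (\prod_i qq i (f i)) * G f) =
    \sum_f G f * fine (P (Aev f)).
  by apply: eq_bigr => f _; rewrite P_Aev mulrC.
rewrite -E_simple; last 2 first.
- by move=> f; exact: expR_ge0.
- exact: Aev_meas.
apply: expectation_le.
- apply: measurableT_comp; first exact: measurable_expR.
  apply: measurable_funM => //; apply: measurable_funX.
  by apply: measurable_sum => i; exact: measurable_funPT.
- apply: measurable_sum => f; apply: measurable_funM => //.
  exact/measurable_indic/Aev_meas.
- by move=> w; exact: expR_ge0.
- by move=> w; apply: sumr_ge0 => f _; rewrite mulr_ge0 ?expR_ge0 ?indicE.
apply: aeW => w.
pose f0 := [ffun i => idx (x i w)].
rewrite (bigD1 f0) //= indicE mem_set; last first.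
  by move=> i _ /=; rewrite ffunE; exact: idx_in.
rewrite mulr1; apply: (@le_trans _ _ (G f0)); last first.
  by rewrite lerDl; apply: sumr_ge0 => f _; rewrite mulr_ge0 ?expR_ge0 ?indicE.
rewrite /G ler_expR add0r; apply: ler_wpM2l => //.
have s0 : 0 <= \sum_i x i w by apply: sumr_ge0 => i _; case/andP: (hx i w).
have sl : \sum_i x i w <= \sum_i vv (f0 i).
  apply: ler_sum => i _; rewrite ffunE; apply: Bset_le; exact: idx_in.
nra.
Qed.

Lemma meas_lhs lam : measurable_fun setT (fun w => expR (lam * (\sum_i x i w) ^+ 2)).
Proof.
apply: measurableT_comp; first exact: measurable_expR.
apply: measurable_funM => //; apply: measurable_funX.
by apply: measurable_sum => i; exact: measurable_funPT.
Qed.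

Lemma triv lam : 0 <= lam ->
  ('E_P[fun w => expR (lam * (\sum_i x i w) ^+ 2)] <= (expR (lam * n%:R ^+ 2))%:E)%E.
Proof.
move=> l0; rewrite -(expectation_cst P).
apply: expectation_le.
- exact: meas_lhs.
- exact: measurable_cst.
- by move=> w; exact: expR_ge0.
- by move=> w; exact: expR_ge0.
apply: aeW => w /=; rewrite ler_expR; apply: ler_wpM2l => //.
have s0 : 0 <= \sum_i x i w by apply: sumr_ge0 => i _; case/andP: (hx i w).
have sl : \sum_i x i w <= n%:R.
  apply: (@le_trans _ _ (\sum_(i < n) (1:R))).
    by apply: ler_sum => i _; case/andP: (hx i w).
  by rewrite sumr_const card_ord.
nra.
Qed.

Lemma bound_N lam c nu : 0 <= lam -> 1 <= c -> 0 <= nu ->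
  (forall i, ('E_P[x i] <= nu%:E)%E) -> lam * (2 * n%:R - 1) <= ln c ->
  ('E_P[fun w => expR (lam * (\sum_i x i w) ^+ 2)] <=
   (expR (lam * c * n%:R * (nu + N%:R^-1) * (1 + c * n%:R * (nu + N%:R^-1))))%:E)%E.
Proof.
move=> l0 c1 nu0 hE hl.
set nu' := nu + N%:R^-1.
have nu'0 : 0 <= nu' by rewrite addr_ge0 // invr_ge0.
have n0 : 0 <= n%:R :> R by [].
have [cnu|cnu] := leP (c * nu') 1.
  apply: le_trans (disc _ l0) _; rewrite lee_fin.
  apply: le_trans (claim _ _ _ n l0 c1 nu'0 cnu qq 0 qq_ge0 qq_sum1 (fun i => qq_sumv i nu (hE i)) (lexx 0) _) _.
    by rewrite add0r.
  rewrite -expRM_natl -expRD ler_expR add0r.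
  set X := n%:R * lam * c ^+ 2 * nu' ^+ 2.
  have X0 : 0 <= X by rewrite /X; apply: mulr_ge0; [rewrite !mulr_ge0 //; lra | exact: sqr_ge0].
  rewrite -subr_ge0.
  have -> : lam * c * n%:R * nu' * (1 + c * n%:R * nu') -
    (n%:R * (lam * c * nu' - lam * c ^+ 2 * nu' ^+ 2) + lam * (n%:R * c * nu') ^+ 2) = X.
    by rewrite /X; ring.
  exact: X0.
apply: le_trans (triv _ l0) _; rewrite lee_fin ler_expR.
rewrite -subr_ge0.
have -> : lam * c * n%:R * nu' * (1 + c * n%:R * nu') - lam * n%:R ^+ 2 =
  lam * (c * n%:R * nu' * (1 + c * n%:R * nu') - n%:R ^+ 2) by ring.
apply: mulr_ge0 => //; rewrite subr_ge0.
have h1 : n%:R <= c * n%:R * nu'.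
  have : n%:R * 1 <= n%:R * (c * nu') by apply: ler_wpM2l => //; lra.
  by rewrite mulr1 => h; apply: le_trans h _; rewrite le_eqVlt; apply/orP; left; apply/eqP; ring.
nra.
Qed.

End S.
Lemma lim_aux (R : realType) (r A B nu : R) : 0 <= A -> 0 <= B -> 0 <= nu ->
  (forall m : nat, r <= expR (A * (nu + (m.+1)%:R^-1) * (1 + B * (nu + (m.+1)%:R^-1)))) ->
  r <= expR (A * nu * (1 + B * nu)).
Proof.
move=> A0 B0 nu0 hr.
set e0 := expR (A * nu * (1 + B * nu)).
have e00 : 0 < e0 by exact: expR_gt0.
set C := A * (1 + 2 * B * nu + B).
have C0 : 0 <= C by apply: mulr_ge0 => //; nra.
have key h : 0 <= h -> h <= 1 -> A * (nu + h) * (1 + B * (nu + h)) <= A * nu * (1 + B * nu) + h * C.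
  move=> h0 h1; rewrite -subr_ge0.
  have -> : A * nu * (1 + B * nu) + h * C - A * (nu + h) * (1 + B * (nu + h)) = A * B * h * (1 - h).
    by rewrite /C; ring.
  by apply: mulr_ge0; [rewrite !mulr_ge0 | lra].
rewrite leNgt; apply/negP => re0.
have r0 : 0 < r by apply: lt_trans re0.
set X := C * r / (r - e0).
have X0 : 0 <= X by rewrite /X; apply: divr_ge0; [apply: mulr_ge0 => //; lra | lra].
set m := Num.bound X.
have hX : X < (m.+1)%:R.
  apply: lt_le_trans (archi_boundP X0) _; rewrite ler_nat; exact: leqnSn.
set M := (m.+1)%:R : R.
have M0 : 0 < M by rewrite /M ltr0n.
set h := M^-1.
have h0 : 0 < h by rewrite /h invr_gt0.
have hM : h * M = 1 by rewrite /h mulVf // gt_eqF.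
have h1 : h <= 1.
  rewrite /h invr_le1 // ?unitfE ?gt_eqF // /M ler1n //.
have t1 : C * r < M * (r - e0).
  by move: hX; rewrite /X ltr_pdivrMr ?subr_gt0 // mulrC.
set t := h * C.
have t0 : 0 <= t by rewrite /t mulr_ge0 // ltW.
have t2 : t * r < r - e0.
  have : h * (C * r) < h * (M * (r - e0)) by rewrite ltr_pM2l.
  have -> : t * r = h * (C * r) by rewrite /t -mulrA.
  have E : r - e0 = h * (M * (r - e0)) by rewrite mulrA hM mul1r.
  by rewrite {2}E.
have t3 : r <= e0 * expR t.
  apply: le_trans (hr m) _.
  by rewrite /e0 -expRD ler_expR /t; apply: key => //; exact: ltW.
have t4 : expR t * (1 - t) <= 1.
  have : 1 - t <= expR (- t) by have := expR_ge1Dx (- t); lra.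
  move=> hh; have := ler_wpM2l (expR_ge0 t) hh.
  by rewrite -expRD subrr expR0.
have t5 : t < 1 by nra.
have t6 : r * (1 - t) <= e0 * expR t * (1 - t) by apply: ler_wpM2r => //; lra.
have t7 : e0 * expR t * (1 - t) <= e0.
  by rewrite -mulrA -[X in _ <= X]mulr1; apply: ler_wpM2l => //; exact: ltW.
nra.
Qed.

Theorem lemma1 (d : measure_display) (T : measurableType d) (R : realType)
    (P : probability T R) (n : nat) (x : 'I_n -> {RV P >-> R})
    (nu c lambda : R) :
  mutually_independent P (fun i => (x i : T -> R)) ->
  (forall i w, 0 <= x i w <= 1) ->
  0 <= nu <= 1 ->
  (forall i, ('E_P[x i] <= nu%:E)%E) ->
  1 <= c ->
  0 <= lambda <= ln c / (4 * n%:R - 3) ->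
  ('E_P[fun w => expR (lambda * (\sum_(i < n) x i w) ^+ 2)]
     <= (expR (lambda * c * n%:R * nu * (1 + c * n%:R * nu)))%:E)%E.
Proof.
move=> hind hx /andP[nu0 nu1] hE c1 /andP[l0 hl].
have lc0 : 0 <= ln c := ln_ge0 c1.
have hl2 : lambda * (2 * n%:R - 1) <= ln c.
  have [n0|n0] := eqVneq n 0%N.
    rewrite n0 mulr0 add0r; nra.
  have n1 : 1 <= n%:R :> R by rewrite ler1n lt0n.
  have p : 0 < 4 * n%:R - 3 :> R by lra.
  rewrite ler_pdivlMr // in hl.
  apply: le_trans hl; apply: ler_wpM2l => //; lra.
have Ef0 : (0 <= 'E_P[fun w => expR (lambda * (\sum_(i < n) x i w) ^+ 2)])%E.
  by apply: expectation_ge0 => w; exact: expR_ge0.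
have Eft := @triv R d T P n x hx lambda l0.
have fin : ('E_P[fun w => expR (lambda * (\sum_(i < n) x i w) ^+ 2)] =
   (fine 'E_P[fun w => expR (lambda * (\sum_(i < n) x i w) ^+ 2)])%:E)%E.
  rewrite fineK // ge0_fin_numE //; exact: le_lt_trans Eft (ltry _).
rewrite fin lee_fin.
have key m : fine ('E_P[fun w => expR (lambda * (\sum_(i < n) x i w) ^+ 2)])%E <=
   expR (lambda * c * n%:R * (nu + (m.+1)%:R^-1) * (1 + c * n%:R * (nu + (m.+1)%:R^-1))).
  have := @bound_N R m.+1 (ltn0Sn m) d T P n x hx hind lambda c nu l0 c1 nu0 hE hl2.
  by rewrite fin lee_fin.
apply: lim_aux nu0 key.
- by rewrite !mulr_ge0 //; lra.
- by rewrite mulr_ge0 //; lra.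
Qed.
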